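(* For positive integers $r$ and integers $0\le d\le n$, let $\mathrm{Sch}_{n,d}^r$ be the set of lattice paths from $(0,n)$ to $(rn,0)$ using steps $(0,-1)$ (down), $(1,0)$ (right) and $(r,-1)$ (diagonal), never passing strictly above the line through $(0,n)$ and $(rn,0)$, and having exactly $n-d$ diagonal steps. For $\alpha\in\mathrm{Sch}_{n,d}^r$ and $1\le i\le n$, let $a_i(\alpha)$ be the $x$-coordinate of the starting point of the unique down or diagonal step of $\alpha$ going from height $n-i+1$ to height $n-i$, and set $\mathrm{aire}(\alpha)=\sum_{i=1}^n\big(r(i-1)-a_i(\alpha)\big)$. Then there is no family of functions $\mathrm{dinv}=\mathrm{dinv}_{n,d}^r:\mathrm{Sch}_{n,d}^r\to\mathbb{Z}_{\ge 0}$ (one for each $r\ge1$ and each $0\le d\le n$) such that for all $r,n,d$ both of the following hold: (i) the polynomial $S_{n,d}^r(q,t)=\sum_{\alpha\in\mathrm{Sch}_{n,d}^r}q^{\mathrm{aire}(\alpha)}t^{\mathrm{dinv}(\alpha)}$ is symmetric, i.e. $S_{n,d}^r(q,t)=S_{n,d}^r(t,q)$; (ii) there is an integer $w$ (possibly depending on $n,d,r$) with $$q^{w}\sum_{\alpha\in\mathrm{Sch}_{n,d}^r}q^{\mathrm{aire}(\alpha)-\mathrm{dinv}(\alpha)}=\frac{1}{[dr+1]_q}\binom{n}{d}_q\binom{dr+n}{n}_q .$$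
   Context: $q$-analogues: $[m]_q=1+q+\cdots+q^{m-1}$, $[m]!_q=[1]_q[2]_q\cdots[m]_q$, $\binom{m}{k}_q=\frac{[m]!_q}{[k]!_q[m-k]!_q}$. The quantity $r(i-1)-a_i(\alpha)$ is the area of row $i$ of $\alpha$ (the number of unit cells in row $i$ between the path and the line through $(0,n)$ and $(rn,0)$). *)

(* Defs.v *)
From HB Require Import structures.
From mathcomp Require Import all_boot all_order all_algebra.
From mathcomp Require Import fraction.
Set Implicit Arguments. Unset Strict Implicit. Unset Printing Implicit Defensive.
Import Order.TTheory GRing.Theory Num.Theory.
Local Open Scope ring_scope.

Definition Dn : 'I_3 := @Ordinal 3 0 isT.   (* down      (0,-1) *)
Definition Rt : 'I_3 := @Ordinal 3 1 isT.   (* right     (1, 0) *)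
Definition Dg : 'I_3 := @Ordinal 3 2 isT.   (* diagonal  (r,-1) *)

Definition nD (s : seq 'I_3) : nat := count (pred1 Dn) s.
Definition nR (s : seq 'I_3) : nat := count (pred1 Rt) s.
Definition nG (s : seq 'I_3) : nat := count (pred1 Dg) s.

Definition xpos (r : nat) (s : seq 'I_3) : int := ((nR s + r * nG s)%N)%:Z.
Definition ypos (n : nat) (s : seq 'I_3) : int := n%:Z - ((nD s + nG s)%N)%:Z.

Definition isSch (r n d : nat) (s : seq 'I_3) : bool :=
  [&& xpos r s == (r * n)%N%:Z, ypos n s == 0, nG s == (n - d)%N &
      [forall k : 'I_(size s).+1,
         xpos r (take k s) + r%:Z * ypos n (take k s) <= (r * n)%N%:Z]].

Fixpoint vstarts (r x : nat) (s : seq 'I_3) : seq nat :=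
  match s with
  | [::] => [::]
  | c :: s' => if c == Rt then vstarts r x.+1 s'
               else x :: vstarts r (if c == Dg then x + r else x)%N s'
  end.

(* a_i(alpha) for i = 1..n is nth 0 (vstarts r 0 s) (i-1) *)
Definition aire (r : nat) (s : seq 'I_3) : nat :=
  \sum_(i < size (vstarts r 0 s)) (r * i - nth 0%N (vstarts r 0 s) i)%N.

Notation "x %:F" := (@FracField.tofrac _ x) : ring_scope.

Definition qint (m : nat) : {poly int} := \sum_(i < m) 'X^i.
Definition qfact (m : nat) : {poly int} := \prod_(1 <= i < m.+1) qint i.
Definition qbinom (m k : nat) : {fraction {poly int}} :=
  (qfact m)%:F / ((qfact k)%:F * (qfact (m - k))%:F).
Definition qF : {fraction {poly int}} := ('X : {poly int})%:F.

(* Main.v *)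
Require Import Defs.
From HB Require Import structures.
From mathcomp Require Import all_boot all_order all_algebra.
From mathcomp Require Import fraction.
From mathcomp Require Import zify lra ring.
Import Order.TTheory GRing.Theory Num.Theory.
Local Open Scope ring_scope.

Lemma D_Xn (n : nat) : (('X^n : {poly int})^`()).[1] = n%:R.
Proof. by rewrite derivXn hornerMn hornerXn expr1n. Qed.

Lemma E_Xn (n : nat) : (('X^n : {poly int})).[1] = 1.
Proof. by rewrite hornerXn expr1n. Qed.

Lemma qint_neq0 (i : nat) : (0 < i)%N -> qint i != 0.
Proof.
move=> hi; apply/eqP => /(congr1 (fun p : {poly int} => p.[1])).
rewrite /qint horner_sum hornerC.
under eq_bigr do rewrite E_Xn.
rewrite sumr_const card_ord => /eqP; rewrite pnatr_eq0; lia.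
Qed.

Lemma qfact0 : qfact 0 = 1.
Proof. by rewrite /qfact big_geq. Qed.

Lemma qfactS m : qfact m.+1 = qfact m * qint m.+1.
Proof. by rewrite /qfact big_nat_recr. Qed.

Lemma aux (F : fieldType) (b c e : F) : b != 0 -> c != 0 ->
  c^-1 * b * (b * c * e / (b * b)) = e.
Proof. by move=> hb hc; field; rewrite hb hc. Qed.

Lemma rhs_eq :
  (qint (1 * 2 + 1))%:F^-1 * qbinom 2 1 * qbinom (1 * 2 + 2) 2 = (qint 4)%:F.
Proof.
rewrite (_ : (1 * 2 + 1 = 3)%N) // (_ : (1 * 2 + 2 = 4)%N) //.
rewrite /qbinom (_ : (2 - 1 = 1)%N) // (_ : (4 - 2 = 2)%N) //.
rewrite !qfactS qfact0 !mul1r !tofracM.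
have h1 : (qint 1)%:F != 0 by rewrite tofrac_eq0 qint_neq0.
have h2 : (qint 2)%:F != 0 by rewrite tofrac_eq0 qint_neq0.
have h3 : (qint 3)%:F != 0 by rewrite tofrac_eq0 qint_neq0.
have -> : (qint 1)%:F = 1 by rewrite /qint big_ord1 expr0 tofrac1.
move: h2 h3; move: (qint 2)%:F (qint 3)%:F (qint 4)%:F => b c e hb hc.
rewrite !mul1r divr1.
exact: (@aux _ b c e hb hc).
Qed.

Lemma S1lem (I : finType) (P : pred I) (f g : I -> nat) :
  \sum_(i | P i) ('X^(f i))%:P * 'X^(g i) = \sum_(i | P i) ('X^(g i))%:P * 'X^(f i) :> {poly {poly int}} ->
  \sum_(i | P i) (f i)%:R = \sum_(i | P i) (g i)%:R :> int.
Proof.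
move=> /(congr1 (fun p : {poly {poly int}} => (p.[1])^`().[1])) /=.
rewrite !horner_sum !raddf_sum !horner_sum.
have e1 (p q : nat) : ((('X^p : {poly int})%:P * 'X^q).[1])^`().[1] = p%:R.
  by rewrite hornerCM hornerXn expr1n mulr1 D_Xn.
rewrite (eq_bigr _ (fun i _ => e1 (f i) (g i))).
by rewrite (eq_bigr _ (fun i _ => e1 (g i) (f i))).
Qed.

Lemma qint4 : qint 4 = 'X^0 + 'X^1 + 'X^2 + 'X^3.
Proof. by rewrite /qint !big_ord_recr big_ord0 /= add0r. Qed.

Theorem mainTheorem1 :
  ~ exists dinv : forall r n d : nat, (n + r * d).-tuple 'I_3 -> nat,
      forall r n d : nat, (0 < r)%N -> (d <= n)%N ->
        (\sum_(a : (n + r * d).-tuple 'I_3 | isSch r n d a)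
            ('X^(aire r a))%:P * 'X^(dinv r n d a)
         = \sum_(a : (n + r * d).-tuple 'I_3 | isSch r n d a)
            ('X^(dinv r n d a))%:P * 'X^(aire r a) :> {poly {poly int}})
        /\
        (exists w : int,
           qF ^ w * \sum_(a : (n + r * d).-tuple 'I_3 | isSch r n d a)
                       qF ^ ((aire r a)%:Z - (dinv r n d a)%:Z)
           = (qint (d * r + 1))%:F^-1 * qbinom n d * qbinom (d * r + n) n).
Proof.
move=> [dinv H].
have [Hi [w Hw]] := H 2%N 2%N 1%N isT isT.
move: Hi Hw; rewrite rhs_eq.
set P := isSch 2 2 1.
set E := dinv 2%N 2%N 1%N.
move=> Hi Hw.
have S1 : \sum_(a : (2 + 2 * 1).-tuple 'I_3 | P a) (aire 2 a)%:R = \sum_(a : (2 + 2 * 1).-tuple 'I_3 | P a) (E a)%:R :> int.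
  exact: (@S1lem _ (fun a : (2 + 2 * 1).-tuple 'I_3 => P a) (fun a => aire 2 a) E Hi).
pose K := (`|w|%N + \sum_(a : (2 + 2 * 1).-tuple 'I_3 | P a) E a)%N.
pose m (a : (2 + 2 * 1).-tuple 'I_3) := (K%:Z + w + (aire 2 a)%:Z - (E a)%:Z).
have M (a : (2 + 2 * 1).-tuple 'I_3) : P a -> 0 <= m a.
  move=> Pa; have : (E a <= \sum_(a : (2 + 2 * 1).-tuple 'I_3 | P a) E a)%N by rewrite (bigD1 a Pa) leq_addr.
  rewrite /m /K; lia.
have qF0 : qF != 0 by rewrite tofrac_eq0 polyX_eq0.
have Hw2 : \sum_(a : (2 + 2 * 1).-tuple 'I_3 | P a) ('X^(absz (m a)) : {poly int}) = 'X^K * qint 4.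
  apply/eqP; rewrite -tofrac_eq rmorph_sum tofracM rmorphXn -/qF -Hw mulrA.
  rewrite (exprnP qF K) -expfzDr // mulr_sumr; apply/eqP/eq_bigr => a Pa.
  rewrite rmorphXn -/qF exprnP gez0_abs ?M // -expfzDr // /m.
  by congr (qF ^ _); rewrite addrA.
have Q4 : 'X^K * qint 4 = 'X^(K + 0) + 'X^(K + 1) + 'X^(K + 2) + 'X^(K + 3) :> {poly int}.
  by rewrite qint4 !mulrDr -!exprD.
have C1 := congr1 (fun p : {poly int} => p.[1]) Hw2.
have C2 := congr1 (fun p : {poly int} => p^`().[1]) Hw2.
rewrite /= Q4 !hornerD !E_Xn horner_sum in C1.
rewrite /= Q4 !raddfD !hornerD !D_Xn raddf_sum horner_sum in C2.
rewrite (eq_bigr (fun _ => 1)) in C1; last by move=> a _; rewrite E_Xn.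
rewrite (eq_bigr (fun a => m a)) in C2; last by move=> a Pa; rewrite D_Xn natz gez0_abs ?M.
have : \sum_(a : (2 + 2 * 1).-tuple 'I_3 | P a) m a = (K%:Z + w) * \sum_(a : (2 + 2 * 1).-tuple 'I_3 | P a) 1 + (\sum_(a : (2 + 2 * 1).-tuple 'I_3 | P a) (aire 2 a)%:R - \sum_(a : (2 + 2 * 1).-tuple 'I_3 | P a) (E a)%:R).
  rewrite mulr_sumr -sumrB -big_split /=; apply: eq_bigr => a _.
  by rewrite /m mulr1 !natz; ring.
rewrite S1 subrr addr0 C2 C1 !natz.
lia.
Qed.
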